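(* Let $\mathcal{R}$ be a proper reflective subcategory of the category of groups with reflector $L$ and unit $\eta_G:G\to LG$. Then $K(G)=\operatorname{Ker}(\eta_G:G\to LG)$ defines a non-trivial subfunctor of the identity functor on the category of groups.
   Context: A full subcategory $\mathcal{R}$ of the category of groups is reflective if the inclusion functor has a left adjoint $L$ (the reflector), with unit $\eta$. It is proper if it is closed under isomorphisms and not equal to the whole category of groups. A subfunctor $K$ of the identity functor assigns to each group $G$ a subgroup $K(G)\subseteq G$ with $f(K(G))\subseteq K(G')$ for every homomorphism $f:G\to G'$; it is non-trivial if $K(G)\neq 1$ for some $G$. *)

(* Defs.v *)
Record Grp : Type := MkGrp {
  carrier :> Type;
  gmul : carrier -> carrier -> carrier;
  gone : carrier;
  ginv : carrier -> carrier;
  gmulA : forall x y z, gmul x (gmul y z) = gmul (gmul x y) z;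
  gmul1l : forall x, gmul gone x = x;
  gmul1r : forall x, gmul x gone = x;
  gmulVl : forall x, gmul (ginv x) x = gone;
  gmulVr : forall x, gmul x (ginv x) = gone
}.

Arguments gmul {g} _ _.
Arguments gone {g}.
Arguments ginv {g} _.

Record Hom (G H : Grp) : Type := MkHom {
  hfun :> G -> H;
  hmul : forall x y, hfun (gmul x y) = gmul (hfun x) (hfun y)
}.

Arguments hfun {G H} _ _.

Definition isomorphic (G H : Grp) : Prop :=
  exists (f : Hom G H) (g : Hom H G),
    (forall x, g (f x) = x) /\ (forall y, f (g y) = y).

(* A full subcategory is given by a class of groups [R].
   It is closed under isomorphisms and proper. *)
Definition iso_closed (R : Grp -> Prop) : Prop :=
  forall G H : Grp, isomorphic G H -> R G -> R H.

Definition proper_class (R : Grp -> Prop) : Prop :=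
  iso_closed R /\ exists G : Grp, ~ R G.

(* [L] with unit [eta] is a reflector onto the full subcategory [R]:
   the inclusion has left adjoint [L] with unit [eta], i.e. each
   [eta G : G -> L G] is a universal arrow from [G] to the inclusion
   (morphisms are compared extensionally). *)
Definition is_reflection (R : Grp -> Prop) (L : Grp -> Grp)
    (eta : forall G : Grp, Hom G (L G)) : Prop :=
  (forall G, R (L G)) /\
  (forall (G H : Grp), R H -> forall f : Hom G H,
     (exists g : Hom (L G) H, forall x, g (eta G x) = f x) /\
     (forall g1 g2 : Hom (L G) H,
        (forall x, g1 (eta G x) = f x) ->
        (forall x, g2 (eta G x) = f x) ->
        forall y, g1 y = g2 y)).

(* A subfunctor of the identity functor on groups: a subgroup K(G) of every
   group G, given as a predicate, with f(K(G)) ⊆ K(G') for every hom f. *)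
Definition is_subgroup (G : Grp) (S : G -> Prop) : Prop :=
  S gone /\ (forall x y, S x -> S y -> S (gmul x y)) /\
  (forall x, S x -> S (ginv x)).

Definition subfunctor_id (K : forall G : Grp, G -> Prop) : Prop :=
  (forall G, is_subgroup G (K G)) /\
  (forall (G H : Grp) (f : Hom G H) (x : G), K G x -> K H (f x)).

Definition nontrivial_subfunctor (K : forall G : Grp, G -> Prop) : Prop :=
  exists (G : Grp) (x : G), K G x /\ x <> gone.

Definition unit_kernel (L : Grp -> Grp) (eta : forall G : Grp, Hom G (L G))
    (G : Grp) (x : G) : Prop :=
  eta G x = gone.

(* Main.v *)
Require Import Defs.
From Stdlib Require Import Classical ClassicalEpsilon FunctionalExtensionality PropExtensionality ProofIrrelevance.

Section GL.
Variable G : Grp.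
Lemma mul_cancel_l (a b c : G) : gmul a b = gmul a c -> b = c.
Proof.
  intro H. rewrite <- (gmul1l G b), <- (gmul1l G c), <- (gmulVl G a), <- !gmulA, H. reflexivity.
Qed.
Lemma inv_uniq (x y : G) : gmul x y = gone -> x = ginv y.
Proof.
  intro H. rewrite <- (gmul1r G x), <- (gmulVr G y), gmulA, H, gmul1l. reflexivity.
Qed.
Lemma ginv_mul (x y : G) : ginv (gmul x y) = gmul (ginv y) (ginv x).
Proof.
  symmetry. apply inv_uniq. rewrite <- gmulA, (gmulA _ (ginv x)), gmulVl, gmul1l, gmulVl. reflexivity.
Qed.
Lemma ginv_one : ginv (@gone G) = gone.
Proof. symmetry; apply inv_uniq. apply gmul1l. Qed.
Lemma ginvK (x : G) : ginv (ginv x) = x.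
Proof. symmetry; apply inv_uniq. apply gmulVr. Qed.
End GL.

Lemma hom1 (G H : Grp) (f : Hom G H) : f gone = gone.
Proof.
  apply (mul_cancel_l H (f gone)). rewrite <- hmul, gmul1l, gmul1r. reflexivity.
Qed.
Lemma homV (G H : Grp) (f : Hom G H) x : f (ginv x) = ginv (f x).
Proof. apply inv_uniq. rewrite <- hmul, gmulVl. apply hom1. Qed.

Record perm (T : Type) := MkPerm {
  pf : T -> T; pg : T -> T;
  pfg : forall x, pf (pg x) = x; pgf : forall x, pg (pf x) = x }.
Arguments pf {T} _ _.
Arguments pg {T} _ _.

Lemma perm_eq T (p q : perm T) : (forall x, pf p x = pf q x) -> p = q.
Proof.
  intro H. assert (Hf : pf p = pf q) by (apply functional_extensionality; auto).
  assert (Hg : pg p = pg q).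
  { apply functional_extensionality. intro x.
    rewrite <- (pfg _ q x) at 1. rewrite <- H. apply pgf. }
  destruct p as [f1 g1 a1 b1], q as [f2 g2 a2 b2]; simpl in *. subst.
  rewrite (proof_irrelevance _ a1 a2), (proof_irrelevance _ b1 b2). reflexivity.
Qed.

Definition pmul T (p q : perm T) : perm T.
Proof.
  refine (MkPerm T (fun x => pf p (pf q x)) (fun x => pg q (pg p x)) _ _).
  - intro x. rewrite pfg, pfg. reflexivity.
  - intro x. rewrite pgf, pgf. reflexivity.
Defined.
Arguments pmul {T} _ _.
Definition pone T : perm T := MkPerm T (fun x => x) (fun x => x) (fun _ => eq_refl) (fun _ => eq_refl).
Definition pinv T (p : perm T) : perm T := MkPerm T (pg p) (pf p) (pgf T p) (pfg T p).

Definition Sym (T : Type) : Grp.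
Proof.
  refine (MkGrp (perm T) pmul (pone T) (@pinv T) _ _ _ _ _);
  intros; apply perm_eq; intros; simpl; auto using pfg, pgf.
Defined.

Section Sep.
Variable A : Grp.
Definition T := A -> Prop.
Definition trf (a : A) (P : T) : T := fun y => P (gmul (ginv a) y).
Lemma trK (a : A) P : trf (ginv a) (trf a P) = P.
Proof.
  apply functional_extensionality; intro y. unfold trf.
  rewrite gmulA, ginvK, gmulVl, gmul1l. reflexivity.
Qed.
Lemma trK' (a : A) P : trf a (trf (ginv a) P) = P.
Proof. rewrite <- (ginvK A a) at 1. apply trK. Qed.
Definition tr (a : A) : perm T := MkPerm T (trf a) (trf (ginv a)) (trK' a) (trK a).
Definition h1 : Hom A (Sym T).
Proof.
  refine (MkHom A (Sym T) tr _).
  intros a b. apply perm_eq. intro P. simpl. apply functional_extensionality; intro y.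
  unfold trf. rewrite ginv_mul, gmulA. reflexivity.
Defined.

Variable M : T.
Definition E : T := fun _ => False.
Definition swf (P : T) : T :=
  if excluded_middle_informative (P = M) then E
  else if excluded_middle_informative (P = E) then M else P.
Lemma swM : swf M = E.
Proof. unfold swf. destruct excluded_middle_informative; congruence. Qed.
Lemma swE : swf E = M.
Proof. unfold swf. destruct excluded_middle_informative; [congruence|].
  destruct excluded_middle_informative; congruence. Qed.
Lemma swO P : P <> M -> P <> E -> swf P = P.
Proof. intros. unfold swf. do 2 (destruct excluded_middle_informative; try congruence). Qed.
Lemma swK P : swf (swf P) = P.
Proof.
  destruct (classic (P = M)) as [->|]; [rewrite swM, swE; auto|].
  destruct (classic (P = E)) as [->|]; [rewrite swE, swM; auto|].
  rewrite (swO P), (swO P); auto.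
Qed.
Definition sw : perm T := MkPerm T swf swf swK swK.
Definition h2 : Hom A (Sym T).
Proof.
  refine (MkHom A (Sym T) (fun a => pmul (pmul sw (tr a)) sw) _).
  intros a b. apply perm_eq. intro P. simpl. rewrite swK.
  f_equal. apply functional_extensionality; intro y. unfold trf.
  rewrite ginv_mul, gmulA. reflexivity.
Defined.

Hypothesis Msub : is_subgroup A M.
Lemma trE a : trf a E = E.
Proof. reflexivity. Qed.
Lemma trM m : M m -> trf m M = M.
Proof.
  destruct Msub as [H1 [H2 H3]]. intro Hm.
  apply functional_extensionality; intro y. unfold trf. apply propositional_extensionality.
  split; intro Hy.
  - replace y with (gmul m (gmul (ginv m) y)). apply H2; auto.
    rewrite gmulA, gmulVr, gmul1l; auto.
  - apply H2; auto.
Qed.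
Lemma agree m : M m -> h1 m = h2 m.
Proof.
  intro Hm. destruct Msub as [H1 [H2 H3]].
  apply perm_eq. intro P. simpl.
  destruct (classic (P = M)) as [->|HM].
  { rewrite swM, trE, swE, trM; auto. }
  destruct (classic (P = E)) as [->|HE].
  { rewrite swE, trM, swM; auto. }
  rewrite (swO P) by auto. rewrite (swO (trf m P)); auto.
  - intro C. apply HM. rewrite <- (trK m P), C. apply trM; auto.
  - intro C. apply HE. rewrite <- (trK m P), C. reflexivity.
Qed.
Lemma differ a : M gone -> ~ M a -> h1 a <> h2 a.
Proof.
  intros H1 Ha C. assert (C' : pf (h1 a) E = pf (h2 a) E) by (rewrite C; auto).
  simpl in C'. rewrite swE, trE in C'.
  assert (Hv : trf a M a) by (unfold trf; rewrite gmulVl; auto).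
  rewrite swO in C'.
  - rewrite <- C' in Hv. exact Hv.
  - intro D. rewrite D in Hv. auto.
  - intro D. rewrite D in Hv. exact Hv.
Qed.
End Sep.

Theorem lemma3p9 (R : Grp -> Prop) (L : Grp -> Grp)
    (eta : forall G : Grp, Hom G (L G)) :
  proper_class R ->
  is_reflection R L eta ->
  subfunctor_id (unit_kernel L eta) /\ nontrivial_subfunctor (unit_kernel L eta).
Proof.
  intros [Hiso [G0 HG0]] [HRL Huniv].
  split.
  - split.
    + intro G. unfold is_subgroup, unit_kernel. split; [apply hom1|]. split.
      * intros x y Hx Hy. rewrite hmul, Hx, Hy. apply gmul1l.
      * intros x Hx. rewrite homV, Hx. apply ginv_one.
    + intros G H f x Hx. unfold unit_kernel in *.
      destruct (Huniv G (L H) (HRL H) (MkHom G (L H) (fun z => eta H (f z))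
         (fun u v => ltac:(cbv beta; rewrite !hmul; reflexivity)))) as [[g Hg] _].
      simpl in Hg. rewrite <- Hg, Hx. apply hom1.
  - apply NNPP. intro Hn.
    assert (Kt : forall (G : Grp) (x : G), eta G x = gone -> x = gone).
    { intros G x Hx. apply NNPP. intro Hne. apply Hn. exists G, x. split; auto. }
    assert (Inj : forall (G : Grp) (x y : G), eta G x = eta G y -> x = y).
    { intros G x y Hxy.
      assert (gmul x (ginv y) = gone).
      { apply Kt. rewrite hmul, homV, Hxy. apply gmulVr. }
      rewrite (inv_uniq _ _ _ H), ginvK. reflexivity. }
    set (A := L G0).
    set (M := fun b : A => exists x, eta G0 x = b).
    assert (Surj : forall a : A, M a).
    { intro a. apply NNPP. intro Ha.
      assert (Msub : is_subgroup A M).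
      { split; [exists gone; apply hom1|]. split.
        - intros u v [x <-] [y <-]. exists (gmul x y). apply hmul.
        - intros u [x <-]. exists (ginv x). apply homV. }
      assert (MnE : M <> E A).
      { intro D. assert (M gone) by (exists gone; apply hom1). rewrite D in H. exact H. }
      set (X := Sym (T A)).
      set (k1 := MkHom A (L X) (fun z => eta X (h1 A z)) (fun u v => ltac:(cbv beta; rewrite !hmul; reflexivity))).
      set (k2 := MkHom A (L X) (fun z => eta X (h2 A M z)) (fun u v => ltac:(cbv beta; rewrite !hmul; reflexivity))).
      set (f := MkHom G0 (L X) (fun z => eta X (h1 A (eta G0 z))) (fun u v => ltac:(cbv beta; rewrite !hmul; reflexivity))).
      destruct (Huniv G0 (L X) (HRL X) f) as [_ U].
      assert (Hag : forall x, k2 (eta G0 x) = f x).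
      { intro x. unfold k2, f; cbn [hfun]. rewrite <- (agree A M Msub); [reflexivity | exists x; reflexivity]. }
      assert (Heq := U k1 k2 (fun x => eq_refl) Hag a).
      simpl in Heq. apply Inj in Heq.
      apply (differ A M a); auto. exists gone; apply hom1. }
    apply HG0. apply (Hiso A G0); [|apply HRL].
    assert (Hch : forall a : A, {x : G0 | eta G0 x = a}).
    { intro a. apply constructive_indefinite_description. apply Surj. }
    set (inv := fun a => proj1_sig (Hch a)).
    assert (Hinv : forall a, eta G0 (inv a) = a) by (intro a; exact (proj2_sig (Hch a))).
    exists (MkHom A G0 inv (fun u v => ltac:(apply Inj; rewrite hmul, !Hinv; reflexivity))).
    exists (eta G0). simpl. split.
    + intro y. apply Hinv.
    + intro y. apply (Inj G0). apply Hinv.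
Qed.
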